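(* Let $C$ be a finite normal flag simplicial complex of dimension $d$ with $n$ vertices. Then $C$ satisfies the non-revisiting path property; in particular $\operatorname{diam}(C)\le n-d-1$.
   Context: A simplicial complex is flag if every inclusion-minimal set of vertices that does not form a face has exactly $2$ elements. For a face $\sigma$ of $C$, the star $\mathrm{St}(\sigma,C)$ is the smallest subcomplex of $C$ containing all faces of $C$ that contain $\sigma$. For a pure simplicial $d$-complex $C$, the dual graph (facet-ridge graph) $G^\ast(C)$ has the $d$-faces (facets) of $C$ as vertices, two facets being adjacent if they intersect in a $(d-1)$-face. A pure simplicial complex $C$ is normal if $G^\ast(\mathrm{St}(\sigma,C))$ is connected for every face $\sigma$ of $C$, including the empty face (whose star is $C$). $\operatorname{diam}(C)$ is the diameter of $G^\ast(C)$. A facet path is a map $\Gamma$ from an integer interval $I$ to the set of facets such that consecutive facets $\Gamma(i),\Gamma(i+1)$ intersect in a $(d-1)$-face. A facet path $\Gamma$ is non-revisiting if whenever $\Gamma(i)$ and $\Gamma(j)$ both lie in $\mathrm{St}(v,C)$ for some vertex $v$, then $\Gamma(k)\in\mathrm{St}(v,C)$ for all $k$ between $i$ and $j$. $C$ has the non-revisiting path property if any two facets of $C$ are joined by a non-revisiting facet path. *)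

(* Defs.v *)
From mathcomp Require Import all_boot.
Set Implicit Arguments. Unset Strict Implicit. Unset Printing Implicit Defensive.

Section Complexes.
Variable V : finType.
Implicit Types (C K : {set {set V}}) (s F G : {set V}).

Definition simplicial_complex C : Prop :=
  set0 \in C /\ forall F G, F \in C -> G \subset F -> G \in C.

(* every element of V is a vertex of C (so C has #|V| vertices) *)
Definition vertex_set_is_V C : Prop := forall v : V, [set v] \in C.

Definition has_dim C (d : nat) : Prop :=
  (exists2 F, F \in C & #|F| = d.+1) /\ (forall F, F \in C -> #|F| <= d.+1).

Definition flag C : Prop :=
  forall S : {set V}, S \notin C -> (forall T : {set V}, T \proper S -> T \in C) -> #|S| = 2.

Definition facet K F : Prop := F \in K /\ forall G, G \in K -> F \subset G -> G = F.

Definition pure K (d : nat) : Prop := forall F, facet K F -> #|F| = d.+1.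

(* star of a face s: the smallest subcomplex containing all faces containing s,
   i.e. the faces T with T :|: s a face *)
Definition star s C : {set {set V}} := [set T in C | (T :|: s) \in C].

(* adjacency in the dual graph of a pure d-complex: facets meeting in a (d-1)-face *)
Definition dual_adj (d : nat) F G : bool := #|F :&: G| == d.

Definition facet_path K (d : nat) F (p : seq {set V}) : Prop :=
  facet K F /\ (forall G, G \in p -> facet K G) /\ path (dual_adj d) F p.

Definition dual_connected K (d : nat) : Prop :=
  forall F G, facet K F -> facet K G ->
    exists p, facet_path K d F p /\ last F p = G.

(* normal: pure, and the dual graph of every star (incl. of the empty face) is connected *)
Definition normal C (d : nat) : Prop :=
  pure C d /\ forall s, s \in C -> dual_connected (star s C) d.

Definition non_revisiting C (F : {set V}) (p : seq {set V}) : Prop :=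
  let q := F :: p in
  forall (v : V) (i j k : nat), i <= k -> k <= j -> j < size q ->
    nth set0 q i \in star [set v] C -> nth set0 q j \in star [set v] C ->
    nth set0 q k \in star [set v] C.

Definition non_revisiting_path_property C (d : nat) : Prop :=
  forall F G, facet C F -> facet C G ->
    exists p, [/\ facet_path C d F p, last F p = G & non_revisiting C F p].

Definition diam_le C (d m : nat) : Prop :=
  forall F G, facet C F -> facet C G ->
    exists p, [/\ facet_path C d F p, last F p = G & size p <= m].

End Complexes.

(* Main.v *)
Require Import Defs.
From mathcomp Require Import all_boot zify.
Set Implicit Arguments. Unset Strict Implicit. Unset Printing Implicit Defensive.
Set Warnings "-notation-overridden".
Section NR.
Variable V : finType.
Definition nr (q : seq {set V}) := forall (v : V) i j k, i <= k -> k <= j -> j < size q ->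
  v \in nth set0 q i -> v \in nth set0 q j -> v \in nth set0 q k.

Lemma nth_catL (F : {set V}) p0 p1 i : i <= size p0 ->
  nth set0 (F :: p0 ++ p1) i = nth set0 (F :: p0) i.
Proof. by move=> hi; rewrite -cat_cons nth_cat /= ltnS hi. Qed.

Lemma nth_catR (F : {set V}) p0 p1 i : size p0 <= i ->
  nth set0 (F :: p0 ++ p1) i = nth set0 (last F p0 :: p1) (i - size p0).
Proof.
move=> hi; rewrite -cat_cons nth_cat /= ltnS.
case: (ltngtP i (size p0)) hi => // [lt|->] _.
- by have -> : i - size p0 = (i - (size p0).+1).+1 by rewrite subnSK.
- rewrite subnn /=.
  have := nth_last set0 (F :: p0); by rewrite /=.
Qed.

Lemma nr_cat (F : {set V}) p0 p1 : nr (F :: p0) -> nr (last F p0 :: p1) ->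
  (forall v, (exists2 G, G \in F :: p0 & v \in G) ->
             (exists2 G, G \in last F p0 :: p1 & v \in G) -> v \in last F p0) ->
  nr (F :: p0 ++ p1).
Proof.
move=> n0 n1 X v i j k ik kj.
rewrite /= size_cat => jlt.
have hL : forall m, m <= size p0 -> nth set0 (F :: p0 ++ p1) m = nth set0 (F :: p0) m.
  by move=> m; apply: nth_catL.
have hR : forall m, size p0 <= m ->
   nth set0 (F :: p0 ++ p1) m = nth set0 (last F p0 :: p1) (m - size p0).
  by move=> m; apply: nth_catR.
have lastE : nth set0 (F :: p0) (size p0) = last F p0.
  by have := nth_last set0 (F :: p0).
case: (leqP j (size p0)) => hj.
  rewrite !hL //; [|exact: leq_trans kj hj|exact: leq_trans (leq_trans ik kj) hj].
  move=> vi vj; exact: (n0 v i j k).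
case: (leqP (size p0) i) => hi.
  rewrite !hR //; [|exact: leq_trans hi ik|exact: leq_trans hi (leq_trans ik kj)]. 
  move=> vi vj; apply: (n1 v (i - size p0) (j - size p0)) => //=; lia.
rewrite hL; last exact: ltnW.
rewrite hR; last exact: ltnW.
move=> vi vj.
have vl : v \in last F p0.
  apply: X.
  - exists (nth set0 (F :: p0) i) => //; apply: mem_nth => /=; lia.
  - exists (nth set0 (last F p0 :: p1) (j - size p0)) => //; apply: mem_nth => /=; lia.
case: (leqP k (size p0)) => hk.
  rewrite hL //; apply: (n0 v i (size p0) k) => //=; last by rewrite lastE.
rewrite hR; last exact: ltnW.
apply: (n1 v 0 (j - size p0) (k - size p0)) => //=; lia.
Qed.
End NR.

Section Basics.
Variable V : finType.
Variable C : {set {set V}}.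
Variable d : nat.
Hypothesis closedC : forall F G : {set V}, F \in C -> G \subset F -> G \in C.
Hypothesis cliqueC : forall X : {set V},
  (forall a b, a \in X -> b \in X -> [set a; b] \in C) -> X \in C.
Hypothesis pureC : pure C d.
Hypothesis connC : forall s, s \in C -> dual_connected (star s C) d.

Lemma facet_in F : facet C F -> F \in C.
Proof. by case. Qed.

Lemma face_in_facet A : A \in C -> exists F, facet C F /\ A \subset F.
Proof.
move=> AC.
pose P := [pred X : {set V} | (X \in C) && (A \subset X)].
have PA : P A by rewrite /P /= AC subxx.
case: (@arg_maxnP _ A P (fun X : {set V} => #|X|) PA) => X /andP[XC AX] Xmax.
exists X; split => //; split => // G GC XG.
apply/eqP; rewrite eq_sym eqEcard XG /=.
apply: Xmax; rewrite /P /= GC; exact: subset_trans AX XG.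
Qed.

Lemma card_facet F : facet C F -> #|F| = d.+1.
Proof. exact: pureC. Qed.

Lemma card_face A : A \in C -> #|A| <= d.+1.
Proof.
move=> /face_in_facet [F [fF AF]]; rewrite -(card_facet fF); exact: subset_leq_card.
Qed.

Lemma facet_sub_eq F G : facet C F -> G \in C -> F \subset G -> G = F.
Proof. by case=> _ H; apply: H. Qed.

Lemma star_facet s G : s \in C -> (facet (star s C) G <-> facet C G /\ s \subset G).
Proof.
move=> sC; split.
- case=> GS Gmax.
  move: GS; rewrite inE => /andP[GC GsC].
  have e : G :|: s = G.
    apply: Gmax; last exact: subsetUl.
    by rewrite inE GsC -setUA setUid GsC.
  split; last by rewrite -e subsetUr.
  split=> // G' G'C GG'; apply: Gmax => //.
  rewrite inE G'C; have -> : G' :|: s = G' by apply/setUidPl; rewrite -e in GG'; exact: subset_trans (subsetUr _ _) GG'.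
  done.
- case=> [[GC Gmax] sG]; split.
  + by rewrite inE GC (setUidPl sG) GC.
  + move=> G'; rewrite inE => /andP[G'C _]; exact: Gmax.
Qed.

Lemma clique_union A1 A2 : A1 \in C -> A2 \in C ->
  (forall a b, a \in A1 -> a \notin A2 -> b \in A2 -> b \notin A1 -> [set a; b] \in C) ->
  A1 :|: A2 \in C.
Proof.
move=> A1C A2C H; apply: cliqueC => a b; rewrite !inE.
have sub1 : forall X, X \in C -> a \in X -> b \in X -> [set a; b] \in C.
  move=> X XC aX bX; apply: closedC XC _; apply/subsetP => z; rewrite !inE.
  by case/orP => /eqP->.
case: (boolP (a \in A1)) => aA1; case: (boolP (b \in A1)) => bA1 //=.
- move=> _ _; exact: sub1 A1C aA1 bA1.
- move=> _ bA2; case: (boolP (a \in A2)) => aA2; first exact: sub1 A2C aA2 bA2.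
  exact: H.
- move=> aA2 _; case: (boolP (b \in A2)) => bA2; first exact: sub1 A2C aA2 bA2.
  rewrite setUC; exact: H.
- move=> aA2 bA2; exact: sub1 A2C aA2 bA2.
Qed.


Implicit Types (B S G H F : {set V}) (x y z w u v a b : V) (k : nat) (p : seq {set V}).

Definition lk (B : {set V}) (x y : V) : bool :=
  [&& x \notin B, y \notin B, x != y & ([set x; y] :|: B) \in C].

Fixpoint R (B S : {set V}) (k : nat) : {set V} :=
  if k is k'.+1 then R B S k' :|: [set x | (x \notin B) && [exists y in R B S k', lk B x y]]
  else S.

Lemma lk_sym B x y : lk B x y = lk B y x.
Proof.
have e : [set x; y] = [set y; x] by apply/setP => z; rewrite !inE orbC.
by rewrite /lk e eq_sym; case: (x \in B); case: (y \in B).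
Qed.

Lemma R_sub B S k : R B S k \subset R B S k.+1.
Proof. exact: subsetUl. Qed.

Lemma R_mono B S k k' : k <= k' -> R B S k \subset R B S k'.
Proof.
move=> /subnKC <-; elim: (k' - k) => [|m IH]; first by rewrite addn0.
rewrite addnS; exact: subset_trans IH (R_sub _ _ _).
Qed.

Lemma R_step B S k x y : x \notin B -> y \in R B S k -> lk B x y -> x \in R B S k.+1.
Proof.
move=> xB yR l; rewrite /= inE; apply/orP; right; rewrite inE xB /=.
by apply/existsP; exists y; rewrite yR.
Qed.

Lemma R_back B S k x : x \in R B S k.+1 -> x \notin R B S k ->
  x \notin B /\ exists2 y, y \in R B S k & lk B x y.
Proof.
rewrite /= inE => /orP [->//|]; rewrite inE => /andP[xB /existsP[y /andP[yR l]]] _.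
by split=> //; exists y.
Qed.

Lemma lk_in B G x y : G \in C -> B \subset G -> x \in G -> y \in G ->
  x \notin B -> y \notin B -> x != y -> lk B x y.
Proof.
move=> GC BG xG yG xB yB xy; rewrite /lk xB yB xy /=.
apply: closedC GC _; rewrite subUset BG andbT; apply/subsetP => z; rewrite !inE.
by case/orP => /eqP->.
Qed.

Lemma lk_face B x y : lk B x y -> [set x; y] :|: B \in C.
Proof. by case/and4P. Qed.

Lemma lk_up B G H w v u : G \in C -> H \in C -> B \subset G -> B \subset H ->
  w \in G -> w \in H -> v \in G -> u \in H -> v != w -> u != w ->
  lk B v u -> lk (w |: B) v u.
Proof.
move=> GC HC BG BH wG wH vG uH vw uw /and4P[vB uB vu l].
rewrite /lk !inE (negbTE vw) (negbTE uw) /= vB uB vu /=.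
have e : [set v; u] :|: (w |: B) = (v |: (w |: B)) :|: (u |: (w |: B)).
  apply/setP => z; rewrite !inE; by case: (z == v); case: (z == u); case: (z == w); case: (z \in B).
rewrite e; apply: clique_union.
- apply: (closedC GC); by rewrite !subUset !sub1set vG wG BG.
- apply: (closedC HC); by rewrite !subUset !sub1set uH wH BH.
- move=> a b; rewrite !inE => /orP[/eqP->|aw] aN; last by rewrite aw orbT in aN.
  move=> /orP[/eqP->|bw] bN; last by rewrite bw orbT in bN.
  apply: closedC l _; exact: subsetUl.
Qed.

Lemma nr1 (F : {set V}) : nr [:: F].
Proof.
move=> v i j k ik kj /= jl.
by have -> : k = i by lia.
Qed.

Lemma nr2 (F H : {set V}) : nr [:: F; H].
Proof.
move=> v i j k ik kj /= jl.
have : (k == i) || (k == j) by lia.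
by case/orP => /eqP->.
Qed.

Lemma last_prop (P : {set V} -> Prop) F p : P F -> (forall G, G \in p -> P G) -> P (last F p).
Proof.
move=> PF Pp; have := mem_last F p; rewrite inE => /orP[/eqP->//|]; exact: Pp.
Qed.

Lemma ndisjP (A1 A2 : {set V}) : ~~ [disjoint A1 & A2] -> exists2 x, x \in A1 & x \in A2.
Proof.
rewrite -setI_eq0 => /set0Pn [x]; rewrite inE => /andP[]; by exists x.
Qed.

Lemma ndisjI (A1 A2 : {set V}) x : x \in A1 -> x \in A2 -> ~~ [disjoint A1 & A2].
Proof.
move=> h1 h2; rewrite -setI_eq0; apply/set0Pn; exists x; by rewrite inE h1 h2.
Qed.

Lemma disjN (A1 A2 : {set V}) x : [disjoint A1 & A2] -> x \in A1 -> x \notin A2.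
Proof. by move=> dj h1; apply/negP => h2; move: dj; apply/negP; apply: ndisjI h1 h2. Qed.

Definition Good B S F p : Prop :=
 (forall G, G \in p -> facet C G /\ B \subset G) /\
     path (dual_adj d) F p /\
     nr (F :: p) /\
     (exists y, y \in last F p /\ y \in S) /\
     (forall G, G \in F :: p -> ~~ [disjoint G & S] -> G = last F p) /\
     (forall G x y, G \in F :: p -> x \in G -> x \notin last F p -> y \in last F p ->
        y \in S -> ~~ lk B x y).

Definition QQ B S k w F p := forall G x, G \in F :: p -> x \in G -> x \notin B ->
  x \notin R B S k -> lk B x w.

Definition PP B := forall S F, [disjoint S & B] -> facet C F -> B \subset F ->
  (exists2 H, facet C H /\ B \subset H & ~~ [disjoint H & S]) -> exists p, Good B S F p.

Lemma good_nil B S F : ~~ [disjoint F & S] -> Good B S F [::].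
Proof.
move=> FS; split; first by []. split; first by [].
split; first exact: nr1.
split; first by have [y yF yS] := ndisjP FS; exists y.
split.
- by move=> G; rewrite inE => /eqP->.
- by move=> G x y; rewrite inE => /eqP-> /= ->.
Qed.

Lemma SK B (IHB : forall x, x \notin B -> PP (x |: B)) S k :
  [disjoint S & B] -> forall F w, facet C F -> B \subset F -> w \in F -> w \notin B ->
  w \in R B S k ->
  exists p, Good B S F p /\
    exists w', [/\ w' \in F, w' \notin B, w' \in R B S k & QQ B S k w' F p].
Proof.
move=> SB; elim: k => [|k IH] F w fF BF wF wB wR.
  exists [::]; split; first by apply: good_nil; exact: ndisjI wF wR.
  exists w; split => // G x; rewrite inE => /eqP-> xF xB xR.
  apply: lk_in (facet_in fF) BF xF wF xB wB _.
  by apply/eqP => e; rewrite e wR in xR.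
case: (boolP [exists x in F, (x \notin B) && (x \in R B S k)]).
  case/existsP => x /andP[xF /andP[xB xR]].
  have [p [Gp [w' [w'F w'B w'R Q]]]] := IH F x fF BF xF xB xR.
  exists p; split => //; exists w'; split => //; first exact: (subsetP (R_sub _ _ _)).
  move=> G0 x0 G0p x0G x0B x0R; apply: Q G0p x0G x0B _.
  by apply: contra x0R; exact: (subsetP (R_sub _ _ _)).
rewrite negb_exists_in => /forall_inP hF.
have wRk : w \notin R B S k by have := hF w wF; rewrite wB.
have [_ [y yR lwy]] := R_back wR wRk.
set B' := w |: B.
set S0 := [set x | [&& x \in R B S k, x \notin B' & lk B w x]].
have S0B' : [disjoint S0 & B'].
  rewrite -setI_eq0; apply/eqP/setP => z; rewrite !inE.
  by case: (z \in R B S k); case: ((z == w) || (z \in B)); rewrite ?andbF.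
have B'F : B' \subset F by rewrite subUset sub1set wF BF.
have [H [fH yH]] := face_in_facet (lk_face lwy).
have B'H : B' \subset H.
  apply: subset_trans yH; rewrite subUset subsetUr andbT sub1set !inE eqxx //.
have yS0 : y \in S0.
  have /and4P[_ yB yw _] := lwy; rewrite !inE yR /= negb_or yB andbT eq_sym yw /=.
  exact: lwy.
have yH' : y \in H by apply: (subsetP yH); rewrite !inE eqxx orbT.
have [p0 G0] := IHB w wB S0 F S0B' fF B'F (ex_intro2 _ _ H (conj fH B'H) (ndisjI yH' yS0)).
case: G0 => [G0a [G0path [G0nr [[y' [y'l y'S0]] [G0d G0e]]]]].
set F' := last F p0.
have memF0 : forall G, G \in F :: p0 -> facet C G /\ B' \subset G.
  move=> G; rewrite inE => /orP[/eqP->|]; [by [] | exact: G0a].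
have [fF' B'F'] : facet C F' /\ B' \subset F' by apply: memF0; exact: mem_last.
have BB' : B \subset B' by exact: subsetUr.
have wB' : w \in B' by rewrite !inE eqxx.
have BF' : B \subset F' := subset_trans BB' B'F'.
move: y'S0; rewrite !inE => /and3P[y'R y'B' lwy'].
have y'F' : y' \in F' := y'l.
have y'B : y' \notin B by move: y'B'; rewrite negb_or => /andP[].
have [p1 [G1 [w1 [w1F' w1B w1R Q1]]]] : exists p1, Good B S F' p1 /\
    exists w1, [/\ w1 \in F', w1 \notin B, w1 \in R B S k & QQ B S k w1 F' p1].
  case: (boolP [disjoint F' & S]) => F'S.
    exact: IH F' y' fF' BF' y'F' y'B y'R.
  exists [::]; split; first exact: good_nil.
  exists y'; split => // G x; rewrite inE => /eqP-> xF xB xR.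
  apply: lk_in (facet_in fF') BF' xF y'F' xB y'B _.
  by apply/eqP => e; rewrite e y'R in xR.
case: G1 => [G1a [G1path [G1nr [[yl [yll ylS]] [G1d G1e]]]]].
have inS0 : forall z, z \in F' -> z \in R B S k -> z \notin B -> z \in S0.
  move=> z zF zR zB; rewrite !inE zR /= negb_or zB andbT.
  have zw : z != w by apply/eqP => e; move: wRk; rewrite -e zR.
  rewrite zw /=; apply: lk_in (facet_in fF') BF' (subsetP B'F' _ wB') zF wB zB _.
  by rewrite eq_sym.
have K : forall G x, G \in F :: p0 -> x \in G -> x \notin F' ->
    x \notin R B S k /\ x \notin B'.
  move=> G x GG xG xF'.
  have xB' : x \notin B' by apply: contra xF'; exact: (subsetP B'F').
  split => //; apply/negP => xR.
  have [fG B'G] := memF0 G GG.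
  have xB : x \notin B by apply: contra xB' => h; rewrite !inE h orbT.
  have xS0 : x \in S0.
    have xw : x != w by apply/eqP => e; rewrite e wB' in xB'.
    rewrite !inE xR /= negb_or xw xB /=.
    apply: lk_in (facet_in fG) (subset_trans BB' B'G) (subsetP B'G _ wB') xG wB xB _.
    by rewrite eq_sym.
  have := G0d G GG (ndisjI xG xS0); rewrite -/F' => e.
  by rewrite -e xG in xF'.
have flagc : forall G x z, G \in F :: p0 -> x \in G -> x \notin F' -> z \in F' ->
    z \in S0 -> ~~ lk B x z.
  move=> G x z GG xG xF' zF' zS0; apply/negP => l.
  have := G0e G x z GG xG xF' zF' zS0; rewrite -/B' => /negP; apply.
  have [fG B'G] := memF0 G GG.
  apply: (lk_up (facet_in fG) (facet_in fF') (subset_trans BB' B'G) BF'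
     (subsetP B'G _ wB') (subsetP B'F' _ wB') xG zF') => //.
  - by apply/eqP => e; rewrite e (subsetP B'F' _ wB') in xF'.
  - by move: zS0; rewrite !inE => /and3P[_ + _]; apply: contra => /eqP->; rewrite eqxx.
exists (p0 ++ p1); split.
  split.
    move=> G; rewrite mem_cat => /orP[/G0a [fG B'G]|/G1a //].
    by split => //; exact: subset_trans BB' B'G.
  split; first by rewrite cat_path G0path G1path.
  split.
    apply: nr_cat G0nr G1nr _ => v [G GG vG] [G' G'G vG'].
    apply/negPn/negP => vF'.
    have [vR vB'] := K G v GG vG vF'.
    have vB : v \notin B by apply: contra vB' => h; rewrite !inE h orbT.
    have l := Q1 G' v G'G vG' vB vR.
    have := flagc G v w1 GG vG vF' w1F' (inS0 w1 w1F' w1R w1B).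
    by rewrite l.
  split; first by exists yl; rewrite last_cat.
  split.
    move=> G; rewrite -cat_cons mem_cat last_cat -/F' => /orP[GG|Gp1] GS.
      have [x xG xS] := ndisjP GS.
      have xR : x \in R B S k by apply: (subsetP (R_mono B S (leq0n k))).
      have xB : x \notin B := disjN SB xS.
      have [fG B'G] := memF0 G GG.
      have xw : x != w by apply/eqP => e; move: wRk; rewrite -e xR.
      have xS0 : x \in S0.
        rewrite !inE xR /= negb_or xB xw /=.
        apply: lk_in (facet_in fG) (subset_trans BB' B'G) (subsetP B'G _ wB') xG wB xB _.
        by rewrite eq_sym.
      have e : G = F' by apply: G0d GG (ndisjI xG xS0).
      rewrite e; apply: G1d; first exact: mem_head.
      by rewrite -e.
    apply: G1d => //; by rewrite inE Gp1 orbT.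
  move=> G x z; rewrite -cat_cons mem_cat last_cat -/F' => /orP[GG|Gp1] xG xl zl zS.
  - case: (boolP (x \in F')) => xF'.
      exact: G1e (mem_head _ _) xF' xl zl zS.
    have [xR xB'] := K G x GG xG xF'.
    have xB : x \notin B by apply: contra xB' => h; rewrite !inE h orbT.
    have zR : z \in R B S k by apply: (subsetP (R_mono B S (leq0n k))).
    have zB : z \notin B := disjN SB zS.
    case: (boolP (z \in F')) => zF'.
      exact: flagc GG xG xF' zF' (inS0 z zF' zR zB).
    have F'S : [disjoint F' & S].
      apply: contraT => h; have e := G1d F' (mem_head _ _) h.
      by rewrite -e (negbTE zF') in zl.
    have k0 : k != 0.
      apply/eqP => k0; move: y'R; rewrite k0 /= => y'S.
      by have := disjN F'S y'F'; rewrite y'S.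
    apply/negP => l; have := R_step xB (zS : z \in R B S 0) l.
    have k1 : 1 <= k by rewrite lt0n.
    move/(subsetP (R_mono B S k1)).
    by rewrite (negbTE xR).
  - have GG : G \in F' :: p1 by rewrite inE Gp1 orbT.
    exact: G1e GG xG xl zl zS.
exists w; split => //.
move=> G x; rewrite -cat_cons mem_cat => /orP[GG|Gp1] xG xB xR.
  have [fG B'G] := memF0 G GG.
  apply: lk_in (facet_in fG) (subset_trans BB' B'G) xG (subsetP B'G _ wB') xB wB _.
  by apply/eqP => e; rewrite e wR in xR.
have GG : G \in F' :: p1 by rewrite inE Gp1 orbT.
have xRk : x \notin R B S k by apply: contra xR; exact: (subsetP (R_sub _ _ _)).
have l := Q1 G x GG xG xB xRk.
by rewrite (R_step xB w1R l) in xR.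
Qed.

Lemma conn_R B S F H y : [disjoint S & B] -> facet C F -> B \subset F ->
  facet C H -> B \subset H -> y \in H -> y \in S -> #|B| < d ->
  exists k, forall x, x \in F -> x \notin B -> x \in R B S k.
Proof.
move=> SB fF BF fH BH yH yS hB.
have BC : B \in C := closedC (facet_in fF) BF.
have [p [[_ [pf pth]] lst]] := connC BC ((star_facet F BC).2 (conj fF BF))
                                      ((star_facet H BC).2 (conj fH BH)).
elim: p F fF BF pf pth lst => [|G p IHp] F fF BF pf pth lst.
  move: lst => /= ->; exists 1 => x xH xB.
  case: (eqVneq x y) => [->|xy]; first exact: (subsetP (R_sub _ _ _)).
  apply: (R_step xB (yS : y \in R B S 0)).
  exact: lk_in (facet_in fH) BH xH yH xB (disjN SB yS) xy.
move: pth => /= /andP[adj pth].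
have [fG BG] := (star_facet G BC).1 (pf G (mem_head _ _)).
have [k hk] := IHp G fG BG (fun G' h => pf G' (mem_behead (h : G' \in behead (G :: p)))) pth lst.
have : ~~ (F :&: G \subset B).
  apply/negP => h; have := subset_leq_card h; move: adj => /eqP ->.
  by rewrite leqNgt hB.
case/subsetPn => z; rewrite inE => /andP[zF zG] zB.
exists k.+1 => x xF xB.
case: (eqVneq x z) => [->|xz]; first exact: (subsetP (R_sub _ _ _)) _ (hk z zG zB).
exact: R_step xB (hk z zG zB) (lk_in (facet_in fF) BF xF zF xB zB xz).
Qed.

Lemma adj_card B F H : facet C F -> facet C H -> F != H -> B \subset F -> B \subset H ->
  #|B| = d -> dual_adj d F H.
Proof.
move=> fF fH FH BF BH cB; rewrite /dual_adj eqn_leq; apply/andP; split.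
  have : F :&: H \proper F.
    rewrite properEneq subsetIl andbT; apply/eqP => e.
    have : F \subset H by rewrite -e subsetIr.
    move/(facet_sub_eq fF (facet_in fH)) => e2; by rewrite e2 eqxx in FH.
  by move/proper_card; rewrite (card_facet fF).
by rewrite -cB; apply: subset_leq_card; rewrite subsetI BF BH.
Qed.

Lemma PP_step B : (forall x, x \notin B -> PP (x |: B)) -> PP B.
Proof.
move=> IHB S F SB fF BF [H [fH BH] HS].
case: (boolP [disjoint F & S]) => FS; last by exists [::]; exact: good_nil.
have [y yH yS] := ndisjP HS.
have FH : F != H by apply/eqP => e; rewrite e (negbTE HS) in FS.
case: (ltngtP #|B| d) => hB.
- have [k hk] := conn_R SB fF BF fH BH yH yS hB.
  have : ~~ (F \subset B).
    apply/negP => h; have := subset_leq_card h; rewrite (card_facet fF).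
    by rewrite leqNgt ltnS ltnW.
  case/subsetPn => w wF wB.
  have [p [Gp _]] := SK IHB SB fF BF wF wB (hk w wF wB).
  by exists p.
- have cB := card_face (closedC (facet_in fF) BF).
  have eBF : B = F.
    by apply/eqP; rewrite eqEcard BF (card_facet fF).
  have FsH : F \subset H by rewrite -eBF.
  by have := facet_sub_eq fF (facet_in fH) FsH => e; rewrite e eqxx in FH.
- exists [:: H]; split.
    by move=> G; rewrite inE => /eqP->.
  split; first by rewrite /= (adj_card fF fH FH BF BH hB).
  split; first exact: nr2.
  split; first by exists y.
  split.
    move=> G; rewrite !inE => /orP[/eqP->|/eqP-> //]; by rewrite FS.
  move=> G x z; rewrite !inE => /orP[/eqP->|/eqP-> xH]; last by rewrite xH.
  move=> xF xH zH zS /=; apply/negP => l.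
  have := card_face (lk_face l).
  have /and4P[xB zB xz _] := l.
  have e : [set x; z] :|: B = x |: (z |: B) by rewrite setUA.
  rewrite e !cardsU1 !inE negb_or xz xB zB hB.
  by rewrite /= add1n ltnn.
Qed.

Lemma cardC_lt B x : x \notin B -> #|~: (x |: B)| < #|~: B|.
Proof.
move=> xB; have h1 := cardsC B; have h2 := cardsC (x |: B); have h3 := cardsU1 x B.
rewrite xB in h3; lia.
Qed.

Lemma PP_all B : PP B.
Proof.
move: {2}#|~: B| (leqnn #|~: B|) => m; elim: m B => [|m IH] B hB; apply: PP_step => x xB.
  have := cardC_lt xB; lia.
apply: IH; have := cardC_lt xB; lia.
Qed.

Definition TT B := forall F G, facet C F -> facet C G -> B \subset F -> B \subset G ->
  exists p, [/\ (forall H, H \in p -> facet C H /\ B \subset H), path (dual_adj d) F p,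
     last F p = G & nr (F :: p)].

Lemma TT_step B : (forall x, x \notin B -> TT (x |: B)) -> TT B.
Proof.
move=> IHB F G fF fG BF BG.
case: (eqVneq F G) => [<-|FG].
  by exists [::]; split => //; exact: nr1.
have : ~~ (G \subset B).
  apply/negP => h; have := facet_sub_eq fG (facet_in fF) (subset_trans h BF).
  by move=> e; rewrite e eqxx in FG.
case/subsetPn => y0 y0G y0B.
set S := G :\: B.
have SB : [disjoint S & B].
  rewrite -setI_eq0; apply/eqP/setP => z; rewrite !inE.
  by case: (z \in B); rewrite ?andbF.
have y0S : y0 \in S by rewrite !inE y0B y0G.
have GS : ~~ [disjoint G & S] := ndisjI y0G y0S.
have [p0 [G0a [G0path [G0nr [[y [yl yS]] [G0d G0e]]]]]] :=
  PP_all SB fF BF (ex_intro2 _ _ G (conj fG BG) GS).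
set F' := last F p0.
have [fF' BF'] : facet C F' /\ B \subset F'.
  by apply: (last_prop (P := fun G => facet C G /\ B \subset G)) => //; exact: G0a.
move: yS; rewrite !inE => /andP[yB yG].
have B'F' : y |: B \subset F' by rewrite subUset sub1set yl BF'.
have B'G : y |: B \subset G by rewrite subUset sub1set yG BG.
have [p1 [G1a G1path G1l G1nr]] := IHB y yB F' G fF' fG B'F' B'G.
exists (p0 ++ p1); split.
- move=> H; rewrite mem_cat => /orP[/G0a//|/G1a [fH B'H]].
  by split => //; apply: subset_trans B'H; exact: subsetUr.
- by rewrite cat_path G0path G1path.
- by rewrite last_cat.
- apply: nr_cat G0nr G1nr _ => v [H0 H0in vH0] [H1 H1in vH1].
  apply/negPn/negP => vF'.
  have := G0e H0 v y H0in vH0 vF' yl (_ : y \in S); rewrite /S !inE yB yG => /(_ isT).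
  apply/negP/negPn.
  have [fH1 B'H1] : facet C H1 /\ y |: B \subset H1.
    move: H1in; rewrite inE => /orP[/eqP->|/G1a] //.
  have vB : v \notin B by apply: contra vF'; exact: (subsetP BF').
  apply: lk_in (facet_in fH1) (subset_trans (subsetUr _ _) B'H1) vH1 _ vB yB _.
  + by apply: (subsetP B'H1); rewrite !inE eqxx.
  + by apply/eqP => e; rewrite e yl in vF'.
Qed.

Lemma TT_all B : TT B.
Proof.
move: {2}#|~: B| (leqnn #|~: B|) => m; elim: m B => [|m IH] B hB; apply: TT_step => x xB.
  have := cardC_lt xB; lia.
apply: IH; have := cardC_lt xB; lia.
Qed.

Lemma starv G v : facet C G -> (G \in star [set v] C) = (v \in G).
Proof.
move=> fG; rewrite /star inE (facet_in fG) /=; apply/idP/idP => h.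
  have e := facet_sub_eq fG h (subsetUl _ _).
  by rewrite -e !inE eqxx orbT.
by rewrite (setUidPl _) ?(facet_in fG) // sub1set.
Qed.

Lemma nr_nonrev F p : facet C F -> (forall G, G \in p -> facet C G) -> nr (F :: p) ->
  non_revisiting C F p.
Proof.
move=> fF fp h; rewrite /non_revisiting /=; move=> v i j k ik kj jl.
have fn : forall m, m < size (F :: p) -> facet C (nth set0 (F :: p) m).
  move=> m ml; have := mem_nth set0 ml; rewrite inE => /orP[/eqP->//|]; exact: fp.
have kl : k < size (F :: p) by move: jl => /=; lia.
have il : i < size (F :: p) by move: jl => /=; lia.
have jl' : j < size (F :: p) by [].
rewrite !starv ?fn //; first (move=> a b; exact: (h v i j k ik kj jl a b)); exact: fn.
Qed.

Lemma nr_tail F p : nr (F :: p) -> nr p.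
Proof.
move=> h v i j k ik kj jl; have := h v i.+1 j.+1 k.+1; rewrite /= !ltnS; exact.
Qed.

Lemma nr_size F p : (forall G, G \in F :: p -> #|G| = d.+1) -> path (dual_adj d) F p ->
  nr (F :: p) -> d.+1 + size p <= #|\bigcup_(G <- F :: p) G|.
Proof.
elim: p F => [|G p IH] F hc pth h.
  by rewrite big_seq1 addn0 hc // mem_head.
move: pth => /= /andP[adj pth].
have IH' := IH G (fun H hH => hc H (mem_behead (hH : H \in behead (F :: G :: p)))) pth (nr_tail h).
have : ~~ (F \subset G).
  apply/negP => sFG; move: adj; rewrite /dual_adj (setIidPl sFG) hc ?mem_head //.
  move/eqP; lia.
case/subsetPn => x xF xG.
have xU : x \notin \bigcup_(H <- G :: p) H.
  rewrite bigcup_seq; apply/negP => /bigcupP [H Hin xH].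
  have jl : index H (G :: p) < size (G :: p) by rewrite index_mem.
  have := h x 0 (index H (G :: p)).+1 1 (leq0n _) _ _ xF _.
  move=> /(_ isT jl); rewrite /= (nth_index set0 Hin) => /(_ xH).
  by rewrite (negbTE xG).
have : x |: \bigcup_(H <- G :: p) H \subset \bigcup_(H <- F :: G :: p) H.
  have e : \bigcup_(H <- F :: G :: p) H = F :|: \bigcup_(H <- G :: p) H by rewrite big_cons.
  rewrite e; apply/subsetP => z; rewrite in_setU1 => /orP[/eqP->|zU].
    by rewrite in_setU xF.
  by rewrite in_setU zU orbT.
move/subset_leq_card; rewrite cardsU1 xU /=.
move: IH'; rewrite /=; lia.
Qed.

End Basics.

Lemma flag_clique (V : finType) (C : {set {set V}}) : simplicial_complex C -> flag C ->
  forall X : {set V}, (forall a b, a \in X -> b \in X -> [set a; b] \in C) -> X \in C.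
Proof.
move=> [_ cl] fl X; move: {2}#|X| (leqnn #|X|) => m.
elim: m X => [|m IH] X hX hp; case: (boolP (X \in C)) => // XC; exfalso.
- have allT : forall T : {set V}, T \proper X -> T \in C.
    move=> T /proper_card; lia.
  have := fl X XC allT; lia.
- have allT : forall T : {set V}, T \proper X -> T \in C.
    move=> T TX; apply: IH.
      have := proper_card TX; lia.
    move=> a b aT bT; apply: hp; [exact: (subsetP (proper_sub TX))|exact: (subsetP (proper_sub TX))].
  have /eqP/cards2P [a [b [_ e]]] := fl X XC allT.
  move: XC; rewrite e hp //; rewrite e !inE eqxx ?orbT //.
Qed.

Theorem theorem1p1 (V : finType) (C : {set {set V}}) (d n : nat) :
  simplicial_complex C -> vertex_set_is_V C -> #|V| = n ->
  has_dim C d -> normal C d -> flag C ->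
  non_revisiting_path_property C d /\ diam_le C d (n - d - 1).
Proof.
move=> sc _ cV _ [pureC connC] fl.
have cl := sc.2.
have clq := flag_clique sc fl.
have main : forall F G, facet C F -> facet C G -> exists p,
    [/\ facet_path C d F p, last F p = G & nr (F :: p)].
  move=> F G fF fG.
  have [p [pa pth pl pnr]] := TT_all cl clq pureC connC fF fG (sub0set F) (sub0set G).
  exists p; split => //; split => //; split => // H /pa []//.
split.
  move=> F G fF fG; have [p [[fF' [fp pth]] pl pnr]] := main F G fF fG.
  have nrv := nr_nonrev fF fp pnr.
  by exists p; split => //; split.
move=> F G fF fG; have [p [[fF' [fp pth]] pl pnr]] := main F G fF fG.
exists p; split => //.
have hc : forall H, H \in F :: p -> #|H| = d.+1.
  move=> H; rewrite inE => /orP[/eqP->|/fp]; exact: pureC.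
have h1 := nr_size hc pth pnr.
have h2 : #|\bigcup_(H <- F :: p) H| <= n by rewrite -cV; exact: max_card.
move: h1 h2; set u := #|_|; lia.
Qed.
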